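(* Let $k\in\mathbb N$, $E\subseteq W(A)$ and $\vec s=(s_n(x))_{n=0}^\infty\in V^\infty(A)$ such that $E$ is $k$-large in $\vec s$. Then there exist $m\ge1$, a variable word $w(x)\in\langle (s_n(x))_{n=0}^{m-1}\,\|\,(A_{k+n})_{n=0}^{m-1}\rangle_v$ and $\vec t\in V^\infty(A)$ with $\vec t\le_{k+m}(s_{m+n}(x))_{n=0}^\infty$ such that, setting $F=\{w(a):a\in A_k\}$, the set $E\cap E_F$ is $(k+m)$-large in $\vec t$.
   Context: $\mathbb N=\{0,1,2,\dots\}$. Fix an increasing sequence $A_0\subseteq A_1\subseteq A_2\subseteq\cdots$ of finite nonempty alphabets and set $A=\bigcup_{n\in\mathbb N}A_n$. $W(A)$ denotes the set of all finite words over $A$, including the empty word; words are concatenated by juxtaposition. Fix a symbol $x\notin A$. A variable word over $A$ is a finite word over $A\cup\{x\}$ in which $x$ occurs at least once; $V(A)$ is the set of variable words. For $s(x)\in V(A)$ and $a\in A\cup\{x\}$, $s(a)$ is obtained by replacing every occurrence of $x$ by $a$. $V^\infty(A)$ is the set of infinite sequences of variable words. For a sequence $(s_n(x))_{n\in I}$ of variable words and a sequence $(B_n)_{n\in I}$ of finite subsets of $A$, both indexed by a set $I\subseteq\mathbb N$ that is either a finite interval or of the form $\{m,m+1,\dots\}$: the constant span $\langle (s_n(x))_{n\in I}\,\|\,(B_n)_{n\in I}\rangle_c$ is the set of all words $s_{l_0}(a_0)s_{l_1}(a_1)\cdots s_{l_j}(a_j)$ with $j\ge0$, $l_0<\dots<l_j$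 in $I$ and $a_i\in B_{l_i}$ for each $i$; the variable span $\langle (s_n(x))_{n\in I}\,\|\,(B_n)_{n\in I}\rangle_v$ is the set of all words $s_{l_0}(a_0)\cdots s_{l_j}(a_j)$ with $j\ge0$, $l_0<\dots<l_j$ in $I$, $a_i\in B_{l_i}\cup\{x\}$ for each $i$, and at least one $a_i=x$. (E.g. $(A_{k+n})_{n=p}^{q}$ denotes the sequence $B_n=A_{k+n}$, $p\le n\le q$.) Extracted $k$-subsequences: let $k\in\mathbb N$ and $\vec s=(s_n(x))_{n=0}^\infty\in V^\infty(A)$. A finite sequence $(t_n(x))_{n=0}^l$ of variable words is an extracted $k$-subsequence of $\vec s$ if there exist integers $0=m_0<m_1<\dots<m_{l+1}$ with $t_i(x)\in\langle (s_n(x))_{n=m_i}^{m_{i+1}-1}\,\|\,(A_{k+n})_{n=m_i}^{m_{i+1}-1}\rangle_v$ for all $0\le i\le l$. An infinite sequence $\vec t=(t_n(x))_{n=0}^\infty$ is an extracted $k$-subsequence of $\vec s$ if each initial segment $(t_n(x))_{n=0}^l$ is a finite extracted $k$-subsequence of $\vec s$. We write $\vec t\le_k\vec s$. A set $E\subseteq W(A)$ is $k$-large in $\vec s\in V^\infty(A)$ if $E\cap\langle\vec w\,\|\,(A_{k+n})_{n=0}^\infty\rangle_c\neq\emptyset$ for every $\vec w\in V^\infty(A)$ with $\vec w\le_k\vec s$. For $E\subseteq W(A)$ and nonempty $F\subseteq W(A)$, $E_F=\{z\in W(A): wz\in E\text{ for every }w\in F\}$. *)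

(* Defs.v *)
From mathcomp Require Import all_boot.
Set Implicit Arguments. Unset Strict Implicit. Unset Printing Implicit Defensive.

Section Words.
Variable T : eqType.

(* words are seq T; variable words are seq (option T), None standing for x *)
Definition vword := seq (option T).
Definition vseqs := nat -> vword.

Definition subst (s : vword) (a : T) : seq T :=
  map (fun o => match o with Some b => b | None => a end) s.
Definition substx (s : vword) (a : option T) : vword :=
  map (fun o => match o with Some b => Some b | None => a end) s.

Variable A : nat -> seq T.

Definition inA (b : T) : Prop := exists n, b \in A n.
Definition isW (z : seq T) : Prop := forall b, b \in z -> inA b.
Definition is_vword (w : vword) : Prop :=
  None \in w /\ forall b, Some b \in w -> inA b.
Definition is_vseq (s : vseqs) : Prop := forall n, is_vword (s n).

Definition cspan (s : vseqs) (I : nat -> Prop) (B : nat -> seq T) (z : seq T) : Prop :=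
  exists js : seq (nat * T),
    js != [::] /\ sorted ltn (map fst js) /\
    (forall p, p \in js -> I p.1 /\ p.2 \in B p.1) /\
    z = flatten (map (fun p => subst (s p.1) p.2) js).

Definition vspan (s : vseqs) (I : nat -> Prop) (B : nat -> seq T) (z : vword) : Prop :=
  exists js : seq (nat * option T),
    js != [::] /\ sorted ltn (map fst js) /\
    (forall p, p \in js -> I p.1 /\
        match p.2 with Some a => a \in B p.1 | None => True end) /\
    has (fun p => p.2 == None) js /\
    z = flatten (map (fun p => substx (s p.1) p.2) js).

Definition fin_extracted (k l : nat) (t s : vseqs) : Prop :=
  exists m : nat -> nat,
    m 0 = 0 /\ (forall i, i <= l -> m i < m i.+1) /\
    forall i, i <= l ->
      vspan s (fun n => m i <= n < m i.+1) (fun n => A (k + n)) (t i).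

Definition extracted (k : nat) (t s : vseqs) : Prop :=
  forall l, fin_extracted k l t s.

Definition large (k : nat) (E : seq T -> Prop) (s : vseqs) : Prop :=
  forall w, is_vseq w -> extracted k w s ->
    exists z, E z /\ cspan w (fun _ => True) (fun n => A (k + n)) z.

Definition E_F (E : seq T -> Prop) (F : seq T -> Prop) (z : seq T) : Prop :=
  isW z /\ forall u, F u -> E (u ++ z).

End Words.

(* Main.v *)
Require Import Defs.
From mathcomp Require Import all_boot.
From Stdlib Require Import Classical ClassicalEpsilon FunctionalExtensionality.
Set Implicit Arguments. Unset Strict Implicit. Unset Printing Implicit Defensive.


Definition pb (P : Prop) : bool :=
  if excluded_middle_informative P then true else false.
Lemma pbP (P : Prop) : pb P = true <-> P.
Proof. rewrite /pb; case: excluded_middle_informative => //. Qed.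

Lemma exists_min (P : nat -> Prop) : (exists n, P n) ->
  exists n, P n /\ forall m, P m -> n <= m.
Proof.
case=> n Pn; apply: NNPP => Hno.
suff: forall j, forall i, i <= j -> ~ P i by move/(_ n n (leqnn n)).
elim=> [|j IH] i.
  rewrite leqn0 => /eqP -> P0; apply: Hno; exists 0; split=> //.
move=> Hi Pi; apply: Hno; exists i; split=> // m Pm.
rewrite leqNgt; apply/negP=> Hmi; apply: (IH m) => //.
by rewrite -ltnS (leq_trans Hmi Hi).
Qed.

Lemma sorted_catP (a b : seq nat) : sorted ltn (a ++ b) <->
  [/\ sorted ltn a, sorted ltn b & forall x y, x \in a -> y \in b -> x < y].
Proof.
elim: a => [|x a IH] /=.
  by split=> [H|[]//]; split.
have tr : transitive ltn by move=> ???; apply: ltn_trans.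
split.
  move=> H; have := order_path_min tr H; rewrite all_cat => /andP[Ha Hb].
  have Hs : sorted ltn (a ++ b) by apply: path_sorted H.
  have [Sa Sb Hab] := IH.1 Hs.
  split=> //.
    by rewrite cat_path in H; case/andP: H.
  move=> x' y; rewrite inE => /orP[/eqP ->|xa yb]; first by move/allP: Hb; apply.
  by apply: Hab.
case=> Sxa Sb Hab; rewrite cat_path Sxa /=.
clear IH; case: b Sb Hab => //= y b Sb H; rewrite Sb andbT; apply: H => //.
  by rewrite mem_last.
by rewrite inE eqxx.
Qed.

Lemma sorted_cons_lt (x : nat) (a : seq nat) : sorted ltn (x :: a) -> forall y, y \in a -> x < y.
Proof.
move=> H y ya; have tr : transitive ltn by move=> ???; apply: ltn_trans.
by have := order_path_min tr H => /allP; apply.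
Qed.

Fixpoint allwords (X : Type) (L : seq X) (n : nat) : seq (seq X) :=
  if n is n'.+1 then [seq a :: w | a <- L, w <- allwords L n'] else [:: [::]].

Lemma mem_allwords (X : eqType) (L : seq X) n w :
  (w \in allwords L n) = (size w == n) && all (mem L) w.
Proof.
elim: n w => [|n IH] [|a w] //=.
  by apply/negbTE/allpairsP=> [[[b u] /= [_ _ H]]].
apply/allpairsP/idP.
  case=> [[b u] /= [Hb Hu [-> ->]]]; rewrite eqSS.
  by move: Hu; rewrite IH => /andP[-> ->]; rewrite Hb.
case/and3P=> Hs Ha Hw; exists (a, w) => /=; split=> //.
by rewrite IH -(eqSS (size w)) Hs.
Qed.


Section HJ.
Variable T : eqType.

Definition okline (L : seq T) (c : seq (option T)) :=
  all (fun o => if o is Some b then b \in L else true) c.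

Definition HJst (L : seq T) := forall (C : eqType) (cols : seq C), exists N,
  forall chi : seq T -> C,
    (forall b, size b = N -> all (mem L) b -> chi b \in cols) ->
    exists c, [/\ size c = N, okline L c, None \in c &
      forall a a', a \in L -> a' \in L -> chi (subst c a) = chi (subst c a')].

Lemma subst_substx (w : vword T) o a : subst (substx w o) a = subst w (odflt a o).
Proof. by elim: w => //= [[b|] w ->] //; case: o. Qed.

Lemma substx_None (w : vword T) : substx w None = w.
Proof. by elim: w => //= [[b|] w ->]. Qed.

Lemma size_subst (w : vword T) a : size (subst w a) = size w.
Proof. by rewrite /subst size_map. Qed.
Lemma size_substx (w : vword T) a : size (substx w a) = size w.
Proof. by rewrite /substx size_map. Qed.

Lemma subst_cat (w w' : vword T) a : subst (w ++ w') a = subst w a ++ subst w' a.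
Proof. by rewrite /subst map_cat. Qed.

Lemma all_subst (L : seq T) c a : okline L c -> a \in L -> all (mem L) (subst c a).
Proof. by move=> Hc Ha; elim: c Hc => //= o c IH /andP[H1 H2]; rewrite IH // andbT; case: o H1. Qed.

Lemma okline_sub (L L' : seq T) c : {subset L <= L'} -> okline L c -> okline L' c.
Proof. by move=> S; elim: c => //= o c IH /andP[H1 H2]; rewrite IH // andbT; case: o H1 => // b /S. Qed.

Section Foc.
Variables (l0 a0 : T) (L' : seq T).
Hypothesis a0L : a0 \in L'.
Hypothesis HJL' : HJst L'.
Let L := l0 :: L'.
Lemma subL : {subset L' <= L}. Proof. by move=> x xL; rewrite inE xL orbT. Qed.

Fixpoint foc (C : eqType) (chi : seq T -> C) (rls : seq (seq (option T))) : Prop :=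
  if rls is l :: r then
    (forall p, size p = sumn (map size r) -> all (mem L) p ->
       forall a, a \in L' -> chi (p ++ subst l a) = chi (p ++ subst l a0)) /\
    foc (fun w => chi (w ++ subst l a0)) r
  else True.

Lemma FOC q : forall (C : eqType) (cols : seq C), exists N,
  forall chi : seq T -> C,
    (forall b, size b = N -> all (mem L) b -> chi b \in cols) ->
    exists rls, [/\ size rls = q, forall l, l \in rls -> okline L' l /\ None \in l,
                   sumn (map size rls) = N & foc chi rls].
Proof.
elim: q => [|q IH] C cols.
  by exists 0 => chi _; exists [::].
have [Nq HNq] := IH C cols.
pose P := allwords L Nq.
have [n Hn] := HJL' (allwords cols (size P)).
exists (Nq + n) => chi Hchi.
pose chi1 x := [seq chi (p ++ x) | p <- P].
have [l [Hsl Hokl HNl Hmono]] : exists c, [/\ size c = n, okline L' c, None \in c &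
      forall a a', a \in L' -> a' \in L' -> chi1 (subst c a) = chi1 (subst c a')].
  apply: Hn => b Hsb Hb; rewrite mem_allwords size_map eqxx /=.
  apply/allP=> y /mapP[p pP ->]; move: pP; rewrite mem_allwords => /andP[/eqP sp ap].
  apply: Hchi; first by rewrite size_cat sp Hsb.
  rewrite all_cat ap /=; apply/allP=> x xb; apply: subL; exact: (allP Hb).
have Hv : forall b, size b = Nq -> all (mem L) b -> chi (b ++ subst l a0) \in cols.
  move=> b Hsb Hb; apply: Hchi; first by rewrite size_cat size_subst Hsb Hsl.
  rewrite all_cat Hb /=; apply/allP=> x xb; apply: subL.
  exact: (allP (all_subst Hokl a0L)).
have [rls [Hsr Hlr Hsum Hfoc]] := HNq (fun w => chi (w ++ subst l a0)) Hv.
exists (l :: rls); split=> //=.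
- by rewrite Hsr.
- by move=> l1; rewrite inE => /orP[/eqP ->|]; [split | apply: Hlr].
- by rewrite Hsum Hsl addnC.
split=> // p sp ap a aL.
have pP : p \in P by rewrite mem_allwords sp Hsum eqxx.
have := Hmono _ _ aL a0L; rewrite /chi1 => /(congr1 (nth (chi [::]) ^~ (index p P))).
by rewrite !(nth_map [::]) ?index_mem // nth_index.
Qed.

Fixpoint wordr (g : nat -> T) (rls : seq (seq (option T))) : seq T :=
  if rls is l :: r then wordr g r ++ subst l (g (size r)) else [::].
Fixpoint liner (g : nat -> option T) (rls : seq (seq (option T))) : seq (option T) :=
  if rls is l :: r then liner g r ++ substx l (g (size r)) else [::].

Lemma size_wordr g rls : size (wordr g rls) = sumn (map size rls).
Proof. by elim: rls => //= l r IH; rewrite size_cat size_subst IH addnC. Qed.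
Lemma size_liner g rls : size (liner g rls) = sumn (map size rls).
Proof. by elim: rls => //= l r IH; rewrite size_cat size_substx IH addnC. Qed.
Lemma subst_liner g rls a : subst (liner g rls) a = wordr (fun m => odflt a (g m)) rls.
Proof. by elim: rls => //= l r IH; rewrite subst_cat subst_substx IH. Qed.
Lemma eq_wordr g g' rls : (forall m, m < size rls -> g m = g' m) -> wordr g rls = wordr g' rls.
Proof.
elim: rls => //= l r IH H; rewrite H // IH // => m Hm; apply: H.
exact: ltn_trans Hm _.
Qed.
Lemma all_wordr g rls : (forall l, l \in rls -> okline L l) ->
  (forall m, m < size rls -> g m \in L) -> all (mem L) (wordr g rls).
Proof.
elim: rls => //= l r IH Hl Hg.
rewrite all_cat; apply/andP; split.
  apply: IH => [l1 H|m Hm]; first by apply: Hl; rewrite inE H orbT.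
  by apply: Hg; exact: ltn_trans Hm _.
by apply: all_subst; [apply: Hl; exact: mem_head | apply: Hg].
Qed.

Lemma FOCW (C : eqType) rls : forall (chi : seq T -> C), foc chi rls ->
  (forall l, l \in rls -> okline L' l) ->
  forall i j g, i <= j -> j <= size rls ->
  (forall m, m < i -> g m \in L) -> (forall m, i <= m < j -> g m \in L') ->
  (forall m, j <= m < size rls -> g m = a0) ->
  chi (wordr g rls) = chi (wordr (fun m => if m < i then g m else a0) rls).
Proof.
have okL : forall l, okline L' l -> okline L l by move=> l; apply: okline_sub subL.
elim: rls => [|l r IH] chi //= [Hf1 Hf2] Hok i j g Hij Hj Hg1 Hg2 Hg3.
have Hokr : forall l1, l1 \in r -> okline L' l1 by move=> l1 H; apply: Hok; rewrite inE H orbT.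
case: (leqP j (size r)) => Hjr.
  rewrite Hg3 ?Hjr ?leqnn // ifN; last by rewrite -leqNgt (leq_trans Hij Hjr).
  apply: (IH _ Hf2 Hokr i j) => // m /andP[H1 H2]; apply: Hg3; by rewrite H1 ltnW.
have Hj' : j = (size r).+1 by apply/eqP; rewrite eqn_leq Hj Hjr.
case: (leqP i (size r)) => Hir.
  rewrite Hf1; first last.
  - by apply: Hg2; rewrite Hir Hj' ltnSn.
  - apply: all_wordr => [l1 H|m Hm]; first by apply: okL; apply: Hokr.
    case: (ltnP m i) => Hmi; first exact: Hg1.
    by apply: subL; apply: Hg2; rewrite Hmi Hj' ltnS ltnW.
  - by rewrite size_wordr.
  apply: (IH _ Hf2 Hokr i (size r)) => //.
    by move=> m /andP[H1 H2]; apply: Hg2; rewrite H1 Hj' ltnS ltnW.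
  by move=> m /andP[H1 H2]; rewrite ltnNge H1 in H2.
have Hi : i = (size r).+1 by apply/eqP; rewrite eqn_leq Hir (leq_trans Hij Hj).
congr chi; congr (_ ++ _); apply: eq_wordr => m Hm.
by rewrite Hi ltnS ltnW.
Qed.
End Foc.

Lemma pigeon (C : eqType) (cols : seq C) (f : nat -> C) :
  (forall n, n <= size cols -> f n \in cols) ->
  exists i j, [/\ i < j, j <= size cols & f i = f j].
Proof.
move=> H; pose s := map f (iota 0 (size cols).+1).
have : ~~ uniq s.
  apply/negP=> U.
  have Hsub : {subset s <= cols}.
    move=> x /mapP[n]; rewrite mem_iota add0n ltnS => Hn ->; exact: H.
  by have := uniq_leq_size U Hsub; rewrite size_map size_iota ltnn.
case/(uniqPn (f 0)) => i [j [Hij Hj Heq]].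
move: Hj Heq; rewrite size_map size_iota ltnS => Hj.
rewrite !(nth_map 0) ?size_iota ?ltnS ?(leq_trans (ltnW Hij) Hj) // !nth_iota
  ?ltnS ?(leq_trans (ltnW Hij) Hj) // !add0n => Heq.
by exists i, j.
Qed.

Theorem HJ (L : seq T) : HJst L.
Proof.
elim: L => [|l0 L' IH] C cols.
  exists 1 => chi _; exists [:: None]; split=> //.
case: L' IH => [|a0 L''] IH.
  exists 1 => chi _; exists [:: None]; split=> // a a'.
  by rewrite !inE => /eqP -> /eqP ->.
set L' := a0 :: L''.
have a0L : a0 \in L' by rewrite inE eqxx.
have [N HN] := FOC l0 a0L IH (size cols) cols.
exists N => chi Hchi.
have [rls [Hsr Hlr Hsum Hfoc]] := HN chi Hchi.
have Hok : forall l, l \in rls -> okline L' l by move=> l /Hlr[].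
have okL : forall l, l \in rls -> okline (l0 :: L') l.
  by move=> l /Hok; apply: okline_sub => x xL; rewrite inE xL orbT.
pose Pt n := wordr (fun m => if m < n then l0 else a0) rls.
have [i [j [Hij Hj Hf]]] : exists i j, [/\ i < j, j <= size cols & chi (Pt i) = chi (Pt j)].
  apply: pigeon => n Hn; apply: Hchi; first by rewrite size_wordr.
  apply: all_wordr => // m _; case: (m < n); by rewrite !inE ?eqxx ?a0L ?orbT.
pose gl m := if m < i then Some l0 else if m < j then None else Some a0.
exists (liner gl rls); split.
- by rewrite size_liner.
- have : forall r : seq (seq (option T)), (forall l : seq (option T), l \in r -> okline (l0 :: L') l) -> okline (l0 :: L') (liner gl r).
    elim=> //= l r IHr Hr; rewrite /okline all_cat; apply/andP; split.
      by apply: IHr => l1 H; apply: Hr; rewrite inE H orbT.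
    have := Hr l (mem_head _ _); rewrite /okline /substx all_map.
    move=> H; apply/allP=> o oL; have := allP H o oL.
    case: o {oL} => [b|] //= _; rewrite /gl.
    case: ifP => _; first by rewrite mem_head.
    by case: ifP => _ //; rewrite inE a0L orbT.
  by apply.
- have : forall r : seq (seq (option T)), i < size r -> (forall l : seq (option T), l \in r -> None \in l) -> None \in liner gl r.
    elim=> //= l r IHr Hir Hr; rewrite mem_cat.
    case: (ltnP i (size r)) => H.
      by rewrite IHr // => l1 H1; apply: Hr; rewrite inE H1 orbT.
    have Ei : i = size r by apply/eqP; rewrite eqn_leq H -ltnS Hir.
    apply/orP; right; rewrite /gl Ei ltnn.
    have -> : size r < j by rewrite -Ei.
    by rewrite substx_None Hr // mem_head.
  by apply=> //; [rewrite Hsr (leq_trans Hij Hj) | move=> l /Hlr[]].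
have key : forall a, a \in l0 :: L' -> chi (subst (liner gl rls) a) = chi (Pt i).
  move=> a aL; rewrite subst_liner.
  case: (boolP (a \in L')) => aL'.
    rewrite (FOCW Hfoc Hok (i := i) (j := j)) ?(ltnW Hij) ?Hsr //.
    + by congr chi; apply: eq_wordr => m _; rewrite /gl; case: (m < i).
    + by move=> m Hm; rewrite /gl Hm mem_head.
    + by move=> m /andP[H1 H2]; rewrite /gl ltnNge H1 /= H2.
    + by move=> m /andP[H1 H2]; rewrite /gl ltnNge (leq_trans (ltnW Hij) H1) /= ltnNge H1.
  move: aL; rewrite inE (negbTE aL') orbF => /eqP ->; rewrite Hf; congr chi.
  apply: eq_wordr => m _; rewrite /gl; case: ifP => Hmi.
    by rewrite (ltn_trans Hmi Hij).
  by case: ifP.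
by move=> a a' aL a'L; rewrite !key.
Qed.
End HJ.


Section Words.
Variables (T : eqType) (A : nat -> seq T).
Hypothesis hA_incr : forall n, {subset A n <= A n.+1}.

Lemma Amono i j : i <= j -> {subset A i <= A j}.
Proof.
move=> /subnK <-; elim: (j - i) => [|d IH] x Hx //.
by rewrite addSn; apply: hA_incr; apply: IH.
Qed.

Definition vcat (s : vseqs T) (js : seq (nat * option T)) : vword T :=
  flatten [seq substx (s p.1) p.2 | p <- js].
Definition ccat (s : vseqs T) (js : seq (nat * T)) : seq T :=
  flatten [seq subst (s p.1) p.2 | p <- js].
Definition okv (k' : nat) (q : nat * option T) : bool :=
  if q.2 is Some b then b \in A (k' + q.1) else true.
Definition isN (q : nat * option T) := q.2 == None.
Definition ocomp (o1 o2 : option T) := if o1 is Some b then Some b else o2.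
Definition liftc (js : seq (nat * T)) := [seq (p.1, Some p.2) | p <- js].
Definition shift (M : nat) (s : vseqs T) : vseqs T := fun n => s (M + n).

Lemma vcat_cat s js1 js2 : vcat s (js1 ++ js2) = vcat s js1 ++ vcat s js2.
Proof. by rewrite /vcat map_cat flatten_cat. Qed.
Lemma ccat_cat s js1 js2 : ccat s (js1 ++ js2) = ccat s js1 ++ ccat s js2.
Proof. by rewrite /ccat map_cat flatten_cat. Qed.
Lemma vcat_cons s p js : vcat s (p :: js) = substx (s p.1) p.2 ++ vcat s js.
Proof. by []. Qed.
Lemma ccat_cons s p js : ccat s (p :: js) = subst (s p.1) p.2 ++ ccat s js.
Proof. by []. Qed.

Lemma substx_cat (w w' : vword T) o : substx (w ++ w') o = substx w o ++ substx w' o.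
Proof. by rewrite /substx map_cat. Qed.
Lemma substx_substx (w : vword T) o1 o2 : substx (substx w o1) o2 = substx w (ocomp o1 o2).
Proof. by elim: w => //= [[b|] w ->] //; case: o1. Qed.
Lemma substx_vcat s js o : substx (vcat s js) o = vcat s [seq (q.1, ocomp q.2 o) | q <- js].
Proof. by elim: js => //= q js IH; rewrite substx_cat IH substx_substx. Qed.
Lemma subst_vcat s js a : subst (vcat s js) a = ccat s [seq (q.1, odflt a q.2) | q <- js].
Proof. by elim: js => //= q js IH; rewrite subst_cat IH subst_substx. Qed.
Lemma map_Some_subst (w : vword T) a : map Some (subst w a) = substx w (Some a).
Proof. by elim: w => //= [[b|] w ->]. Qed.
Lemma ccat_lift s js : map Some (ccat s js) = vcat s (liftc js).
Proof. by elim: js => //= p js IH; rewrite map_cat IH map_Some_subst. Qed.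
Lemma subst_map_Some (z : seq T) a : subst (map Some z) a = z.
Proof. by elim: z => //= b z ->. Qed.

Lemma sorted_shift M (l : seq nat) : sorted ltn l -> sorted ltn (map (addn M) l).
Proof.
by move=> H; rewrite sorted_map; apply: sub_sorted H => x y /=; rewrite ltn_add2l.
Qed.

Lemma vcat_shift M s js :
  vcat (shift M s) js = vcat s [seq (M + p.1, p.2) | p <- js].
Proof. by elim: js => // p js IH; exact: (congr1 (cat _) IH). Qed.
Lemma ccat_shift M s js :
  ccat (shift M s) js = ccat s [seq (M + p.1, p.2) | p <- js].
Proof. by elim: js => // p js IH; exact: (congr1 (cat _) IH). Qed.

Lemma leq_foldmax (l : seq nat) x : x \in l -> x <= foldr maxn 0 l.
Proof.
elim: l => //= y l IH; rewrite inE => /orP[/eqP ->|H]; first exact: leq_maxl.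
by apply: leq_trans (IH H) (leq_maxr _ _).
Qed.

Lemma in_tl (X : eqType) (y x : X) s : x \in s -> x \in y :: s.
Proof. by rewrite inE => ->; rewrite orbT. Qed.

Section Comp.
Variables (k' : nat) (t s' : vseqs T) (J : nat) (m : nat -> nat).
Hypotheses (m0 : m 0 = 0) (mlt : forall i, i < J -> m i < m i.+1)
  (Hrep : forall i, i < J ->
     vspan s' (fun n => m i <= n < m i.+1) (fun n => A (k' + n)) (t i)).

Lemma m_mono a b : a <= b -> b <= J -> m a <= m b.
Proof.
move=> Hab; elim: b Hab => [|b IH]; first by rewrite leqn0 => /eqP ->.
rewrite leq_eqVlt => /orP[/eqP -> //|]; rewrite ltnS => Hab HbJ.
by apply: leq_trans (IH Hab (ltnW HbJ)) (ltnW (mlt HbJ)).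
Qed.
Lemma m_smono a b : a < b -> b <= J -> m a < m b.
Proof. by move=> Hab HbJ; apply: leq_trans (mlt (leq_trans Hab HbJ)) (m_mono Hab HbJ). Qed.
Lemma m_ge i : i <= J -> i <= m i.
Proof.
elim: i => // i IH HiJ; apply: leq_ltn_trans (IH (ltnW HiJ)) (mlt HiJ).
Qed.

Lemma compose (js : seq (nat * option T)) : sorted ltn (map fst js) ->
  (forall p, p \in js -> p.1 < J /\ okv k' p) ->
  exists js', [/\ vcat t js = vcat s' js', sorted ltn (map fst js'),
    forall q, q \in js' -> (exists2 p, p \in js & m p.1 <= q.1 < m p.1.+1) /\ okv k' q,
    has isN js -> has isN js' &
    (js != [::] -> js' != [::]) /\
    (all (fun q => q.2 != None) js -> all (fun q => q.2 != None) js')].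
Proof.
elim: js => [|p js IH] /=; first by move=> _ _; exists [::].
move=> Hs Hjs.
have Hs' : sorted ltn (map fst js) by apply: path_sorted Hs.
have Hlt : forall y, y \in map fst js -> p.1 < y by apply: sorted_cons_lt.
have [Hp1 Hp2] := Hjs p (mem_head _ _).
have [js1 [E1 S1 M1 N1 [_ A1]]] := IH Hs' (fun q Hq => Hjs q (in_tl p Hq)).
have [jsp [Hne [Hsp [Hmp [HNp Ep]]]]] := Hrep Hp1.
exists ([seq (q.1, ocomp q.2 p.2) | q <- jsp] ++ js1); split.
- have Ep' : t p.1 = vcat s' jsp := Ep.
  by rewrite vcat_cat vcat_cons E1 Ep' substx_vcat.
- rewrite map_cat; apply/sorted_catP; split=> //.
    by rewrite -map_comp; apply: Hsp.
  move=> x y /mapP[q /mapP[q0 qin ->] ->] /mapP[q' q'in ->] /=.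
  have [[p' p'in /andP[H1 H2]] _] := M1 q' q'in.
  have [/andP[_ H3] _] := Hmp q0 qin.
  apply: leq_trans H3 (leq_trans _ H1); apply: m_mono.
    by apply: Hlt; apply: map_f.
  by have [H _] := Hjs p' (in_tl p p'in); apply: ltnW.
- move=> q; rewrite mem_cat => /orP[/mapP[q0 q0in ->]|qin] /=.
    have [H1 H2] := Hmp q0 q0in; split; first by exists p; rewrite ?mem_head.
    rewrite /okv /=; case: q0 {q0in} H1 H2 => [n [b|]] //= /andP[H1 _] _.
    move: Hp2; rewrite /okv; case: p.2 => // a Ha.
    apply: (Amono _ Ha); rewrite leq_add2l; apply: leq_trans H1.
    by apply: m_ge; apply: ltnW.
  have [[p' p'in H] H'] := M1 q qin; split=> //; exists p'=> //.
  exact: in_tl.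
- rewrite has_cat => /orP[HpN|]; last by move/N1=> ->; rewrite orbT.
  rewrite /isN /= in HpN; rewrite (eqP HpN); apply/orP; left.
  case/hasP: HNp => q qin Hq; apply/hasP; exists (q.1, ocomp q.2 None).
    by apply: map_f.
  by rewrite /isN /=; move: Hq; rewrite /isN => /eqP ->.
split; first by move=> _; case: jsp Hne {Hsp Hmp HNp Ep}.
move=> /andP[Hp3 Hall]; rewrite all_cat A1 // andbT.
by apply/allP=> q /mapP[q0 _ ->] /=; case: q0.2 => //; case: p.2 Hp3.
Qed.
End Comp.

Lemma sorted_subn B (l : seq nat) : all (leq B) l -> sorted ltn l ->
  sorted ltn (map (subn^~ B) l).
Proof.
case: l => // x l /=; elim: l x => //= y l IH x /andP[Hx Hl] /andP[Hxy Hp].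
apply/andP; split; first by rewrite ltn_sub2r // (leq_ltn_trans Hx Hxy).
exact: IH.
Qed.

Lemma vspan_sub (s : vseqs T) (I I' : nat -> Prop) B (w : vword T) : (forall n, I n -> I' n) ->
  vspan s I B w -> vspan s I' B w.
Proof.
move=> HI [js [H1 [H2 [H3 [H4 H5]]]]]; exists js; split=> //; split=> //.
split=> //; move=> p /H3 [Hp Hq]; split=> //; exact: HI.
Qed.

Lemma vspan_shiftup M k0 (s : vseqs T) lo hi (w : vword T) :
  vspan (shift M s) (fun n => lo <= n < hi) (fun n => A (k0 + M + n)) w ->
  vspan s (fun n => M + lo <= n < M + hi) (fun n => A (k0 + n)) w.
Proof.
move=> [js [H1 [H2 [H3 [H4 H5]]]]]; exists [seq (M + p.1, p.2) | p <- js]; split.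
  by case: js H1 {H2 H3 H4 H5}.
split; first by rewrite -map_comp (eq_map (g := addn M \o fst)) // map_comp sorted_shift.
split.
  move=> p /mapP[q qin ->] /=; have [Hq1 Hq2] := H3 q qin.
  by rewrite !leq_add2l ltn_add2l addnA.
split; first by rewrite has_map.
exact: (etrans H5 (vcat_shift M s js)).
Qed.

Lemma vspan_shiftdown B k0 (s : vseqs T) a b (w : vword T) : B <= a ->
  vspan s (fun n => a <= n < b) (fun n => A (k0 + n)) w ->
  vspan (shift B s) (fun n => a - B <= n < b - B) (fun n => A (k0 + B + n)) w.
Proof.
move=> HB [js [H1 [H2 [H3 [H4 H5]]]]]; exists [seq (p.1 - B, p.2) | p <- js]; split.
  by case: js H1 {H2 H3 H4 H5}.
have HjsB : forall p, p \in js -> B <= p.1.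
  by move=> p /H3 [/andP[Hp _] _]; apply: leq_trans Hp.
split.
  rewrite -map_comp (eq_map (g := subn^~ B \o fst)) // map_comp sorted_subn //.
  by apply/allP=> x /mapP[p pin ->]; apply: HjsB.
split.
  move=> p /mapP[q qin ->] /=; have [/andP[Hq1 Hq1'] Hq2] := H3 q qin.
  have Bb : B < b := leq_ltn_trans (leq_trans HB Hq1) Hq1'.
  split; first by rewrite leq_sub2r //= ltn_sub2r.
  by case: q.2 Hq2 => // c Hc; rewrite -addnA subnKC // (HjsB q qin).
split; first by rewrite has_map.
apply: (etrans H5); rewrite -/(vcat s js) -/(vcat (shift B s) _) vcat_shift -map_comp.
congr vcat; rewrite -[LHS]map_id; apply/eq_in_map => p pin /=.
by rewrite subnKC ?(HjsB p pin) //; case: p {pin}.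
Qed.

Definition BR k' (t s' : vseqs T) J B := exists m, [/\ m 0 = 0, m J = B,
  forall i, i < J -> m i < m i.+1 &
  forall i, i < J -> vspan s' (fun n => m i <= n < m i.+1) (fun n => A (k' + n)) (t i)].


Lemma vspanE (s : vseqs T) lo hi k' (w : vword T) :
  vspan s (fun n => lo <= n < hi) (fun n => A (k' + n)) w <->
  exists js, [/\ js != [::], sorted ltn (map fst js),
    forall q, q \in js -> lo <= q.1 < hi /\ okv k' q, has isN js & w = vcat s js].
Proof.
split.
  case=> js [H1 [H2 [H3 [H4 H5]]]]; exists js; split=> // q /H3 [Hq1 Hq2].
  by split=> //; rewrite /okv; case: q.2 Hq2.
case=> js [H1 H2 H3 H4 H5]; exists js; split=> //; split=> //; split; last by [].
by move=> q /H3 [Hq1 Hq2]; split=> //; move: Hq2; rewrite /okv; case: q.2.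
Qed.

Lemma cspanE (s : vseqs T) k' (z : seq T) :
  cspan s (fun _ => True) (fun n => A (k' + n)) z <->
  exists js : seq (nat * T), [/\ js != [::], sorted ltn (map fst js),
    forall q, q \in js -> q.2 \in A (k' + q.1) & z = ccat s js].
Proof.
split.
  by case=> js [H1 [H2 [H3 H4]]]; exists js; split=> // q /H3 [].
by case=> js [H1 H2 H3 H4]; exists js; split=> //; split=> //; split=> // q /H3.
Qed.

Lemma BR_vcompose k' (t s' : vseqs T) J B js : BR k' t s' J B ->
  sorted ltn (map fst js) -> (forall p, p \in js -> p.1 < J /\ okv k' p) ->
  exists js', [/\ vcat t js = vcat s' js', sorted ltn (map fst js'),
    forall q, q \in js' -> q.1 < B /\ okv k' q,
    has isN js -> has isN js' &
    (js != [::] -> js' != [::]) /\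
    (all (fun q => q.2 != None) js -> all (fun q => q.2 != None) js')].
Proof.
case=> m [m0 mJ mlt mv] Hs Hjs.
have [js' [E1 S1 M1 N1 X1]] := compose mlt mv Hs Hjs.
exists js'; split=> // q /M1 [[p pin /andP[_ H]] Hq]; split=> //.
rewrite -mJ; apply: leq_trans H (m_mono mlt _ (leqnn J)).
by have [] := Hjs p pin.
Qed.

Lemma BR_ccompose (x0 : T) k' (t s' : vseqs T) J B (js : seq (nat * T)) : BR k' t s' J B ->
  sorted ltn (map fst js) -> (forall p, p \in js -> p.1 < J /\ p.2 \in A (k' + p.1)) ->
  exists js2 : seq (nat * T), [/\ ccat t js = ccat s' js2, sorted ltn (map fst js2),
    forall q, q \in js2 -> q.1 < B /\ q.2 \in A (k' + q.1) &
    (js != [::] -> js2 != [::])].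
Proof.
move=> HB Hs Hjs.
have Hs' : sorted ltn (map fst (liftc js)) by rewrite /liftc -map_comp.
have Hjs' : forall p, p \in liftc js -> p.1 < J /\ okv k' p.
  by move=> p /mapP[p' p'in ->]; have [H1 H2] := Hjs p' p'in.
have [js' [E1 S1 M1 N1 [X1 X2]]] := BR_vcompose HB Hs' Hjs'.
exists [seq (q.1, odflt x0 q.2) | q <- js'].
have Hl : liftc [seq (q.1, odflt x0 q.2) | q <- js'] = js'.
  rewrite /liftc -map_comp -[RHS]map_id; apply/eq_in_map => q qin /=.
    have : all (fun q => q.2 != None) js' by apply: X2; apply/allP=> p /mapP[? _ ->].
    by move/allP/(_ q qin); case: q {qin} => ? [].
  split.
  + by apply: (inj_map Some_inj); rewrite !ccat_lift Hl.
  + by rewrite -map_comp.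
  + move=> q /mapP[q' q'in ->] /=; have [H1 H2] := M1 q' q'in; split=> //.
    have : all (fun q => q.2 != None) js' by apply: X2; apply/allP=> p /mapP[? _ ->].
    by move/allP/(_ q' q'in); move: H2; rewrite /okv; case: q'.2.
  + move=> Hne; have : js' != [::] by apply: X1; rewrite /liftc; case: (js) Hne.
    by case: (js').
Qed.

Lemma ext_refl k' (s : vseqs T) : extracted A k' s s.
Proof.
move=> l; exists id; split=> //; split=> // i _.
apply/vspanE; exists [:: (i, None)]; split=> //=.
- by move=> q; rewrite inE => /eqP -> /=; rewrite leqnn ltnSn.
by rewrite /vcat /= substx_None cats0.
Qed.

Lemma fe_BR k' l (t s' : vseqs T) : fin_extracted A k' l t s' -> exists B, BR k' t s' l.+1 B.
Proof.
case=> m [m0 [mlt mv]]; exists (m l.+1), m; split=> // i Hi; by [apply: mlt | apply: mv].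
Qed.

Lemma ext_trans k' (t2 t1 s' : vseqs T) :
  extracted A k' t2 t1 -> extracted A k' t1 s' -> extracted A k' t2 s'.
Proof.
move=> H21 H1s l.
have [m2 [m20 [m2lt m2v]]] := H21 l.
set J := m2 l.+1.
have J0 : 0 < J by apply: leq_ltn_trans (leq0n _) (m2lt l (leqnn l)).
have [m1 [m10 [m1lt m1v]]] := H1s J.-1.
have m1lt' : forall i, i < J -> m1 i < m1 i.+1.
  by move=> i Hi; apply: m1lt; rewrite -ltnS prednK.
have m1v' : forall i, i < J ->
    vspan s' (fun n => m1 i <= n < m1 i.+1) (fun n => A (k' + n)) (t1 i).
  by move=> i Hi; apply: m1v; rewrite -ltnS prednK.
have m2lt' : forall i, i < l.+1 -> m2 i < m2 i.+1 by move=> i; rewrite ltnS; apply: m2lt.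
exists (fun i => m1 (m2 i)); split; first by rewrite m20 m10.
split.
  move=> i Hi; apply: (m_smono m1lt'); first exact: m2lt.
  by apply: (m_mono m2lt').
move=> i Hi.
have /vspanE [js [H1 H2 H3 H4 H5]] := m2v i Hi.
have Hm2J : m2 i.+1 <= J by apply: (m_mono m2lt').
have Hjs : forall p, p \in js -> p.1 < J /\ okv k' p.
  move=> p /H3 [/andP[_ Hp] Hok]; split=> //; exact: leq_trans Hp Hm2J.
have [js' [E1 S1 M1 N1 [X1 _]]] := compose m1lt' m1v' H2 Hjs.
apply/vspanE; exists js'; split=> //.
- exact: X1.
- move=> q /M1 [[p pin /andP[Hq1 Hq2]] Hok]; split=> //.
  have [/andP[Hp1 Hp2] _] := H3 p pin.
  rewrite (leq_trans _ Hq1) ?(m_mono m1lt') //=; last by apply: leq_trans (ltnW Hp2) Hm2J.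
  apply: leq_trans Hq2 _; apply: (m_mono m1lt') => //.
- exact: N1.
by rewrite H5.
Qed.

Lemma cspan_trans (x0 : T) k' (t2 t1 : vseqs T) (z : seq T) : extracted A k' t2 t1 ->
  cspan t2 (fun _ => True) (fun n => A (k' + n)) z ->
  cspan t1 (fun _ => True) (fun n => A (k' + n)) z.
Proof.
move=> H /cspanE [js [H1 H2 H3 H4]].
set l := foldr maxn 0 (map fst js).
have [B HB] := fe_BR (H l).
have Hjs : forall p, p \in js -> p.1 < l.+1 /\ p.2 \in A (k' + p.1).
  by move=> p pin; split; [rewrite ltnS; apply: leq_foldmax; apply: map_f | apply: H3].
have [js2 [E S M N]] := BR_ccompose x0 HB H2 Hjs.
apply/cspanE; exists js2; split=> //.
- exact: N.
- by move=> q /M [].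
by rewrite H4.
Qed.

Lemma ext_down k0 M (t s : vseqs T) :
  extracted A (k0 + M) t (shift M s) -> extracted A k0 t s.
Proof.
move=> H l; have [m [m0 [mlt mv]]] := H l.
exists (fun i => if i is 0 then 0 else M + m i); split=> //; split.
  move=> [|i] Hi /=.
    by have := mlt 0 Hi; rewrite m0 => H0; apply: leq_trans H0 (leq_addl _ _).
  by rewrite ltn_add2l; apply: mlt.
move=> i Hi; apply: vspan_sub (vspan_shiftup (mv i Hi)).
move=> n /andP[H1 H2]; case: i {Hi} H1 H2 => [|i] H1 H2 /=; by rewrite ?H1 ?H2.
Qed.

Lemma split_ext k' (t s' : vseqs T) J : extracted A k' t s' -> 0 < J ->
  exists B, [/\ J <= B, BR k' t s' J B & extracted A (k' + B) (shift J t) (shift B s')].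
Proof.
move=> H J0.
have [B0 HB0] : exists B, BR k' t s' J B by have := fe_BR (H J.-1); rewrite prednK.
have [B [HB Hmin]] := exists_min (ex_intro _ B0 HB0).
exists B; split=> //.
  by case: HB => m [m0 mJ mlt _]; rewrite -mJ; apply: (m_ge mlt).
move=> l; have [m [m0 [mlt mv]]] := H (J + l).
have mlt' : forall i, i < (J + l).+1 -> m i < m i.+1 by move=> i; rewrite ltnS; apply: mlt.
have HBm : B <= m J.
  apply: Hmin; exists m; split=> // i Hi.
    by apply: mlt; apply: leq_trans (ltnW Hi) (leq_addr _ _).
  by apply: mv; apply: leq_trans (ltnW Hi) (leq_addr _ _).
have HBm' : forall i, i <= (J + l).+1 -> J <= i -> B <= m i.
  by move=> i Hi HJi; apply: leq_trans HBm (m_mono mlt' HJi Hi).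
exists (fun i => if i is 0 then 0 else m (J + i) - B); split=> //; split.
  move=> [|i] Hi /=.
    rewrite subn_gt0 addn1; apply: leq_ltn_trans HBm (mlt J (leq_addr _ _)).
  have Hlt : m (J + i.+1) < m (J + i.+2) by rewrite [J + i.+2]addnS; apply: mlt; rewrite leq_add2l.
  have HB2 : B <= m (J + i.+1).
    by apply: HBm' (leq_addr _ _); rewrite -addnS leq_add2l ltnS ltnW.
  exact: ltn_sub2r (leq_ltn_trans HB2 Hlt) Hlt.
move=> i Hi.
have HB' : B <= m (J + i) by apply: HBm' (leq_addr _ _); apply: leq_trans (leqnSn _); rewrite leq_add2l.
apply: vspan_sub (vspan_shiftdown HB' (mv (J + i) _)); last by rewrite leq_add2l.
move=> n /andP[H1 H2]; case: i {Hi HB'} H1 H2 => [|i] H1 H2 /=.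
  by rewrite addn0 addn1 in H2 *; rewrite H2.
by rewrite H1 [J + i.+2]addnS.
Qed.
End Words.


Section Aux.
Variables (T : eqType) (A : nat -> seq T).
Hypothesis hA_incr : forall n, {subset A n <= A n.+1}.

Lemma shift_shift (s : vseqs T) M B : shift B (shift M s) = shift (M + B) s.
Proof. by apply: functional_extensionality => n; rewrite /shift addnA. Qed.
Lemma shift0 (s : vseqs T) : shift 0 s = s.
Proof. by apply: functional_extensionality => n; rewrite /shift add0n. Qed.

Lemma map_pair_zip (X Y Z : Type) (l1 : seq X) (l2 : seq Y) (f : Y -> Z) :
  [seq (q.1, f q.2) | q <- zip l1 l2] = zip l1 (map f l2).
Proof. by elim: l1 l2 => [|x l1 IH] [|y l2] //=; rewrite IH. Qed.

Lemma mem_zip2 (X Y : eqType) (l1 : seq X) (l2 : seq Y) x y :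
  (x, y) \in zip l1 l2 -> x \in l1 /\ y \in l2.
Proof.
elim: l1 l2 => [|a l1 IH] [|b l2] //=; rewrite inE => /orP[/eqP [-> ->]|/IH [H1 H2]].
  by rewrite eqxx mem_head.
by split; apply: in_tl.
Qed.

Lemma ccat1 (s : vseqs T) n a : ccat s [:: (n, a)] = subst (s n) a.
Proof. by rewrite /ccat /= cats0. Qed.

Lemma rcons_last (X : eqType) (l : seq X) x : x \in rcons l x.
Proof. by rewrite mem_rcons mem_head. Qed.
Lemma rcons_in (X : eqType) (l : seq X) x y : y \in l -> y \in rcons l x.
Proof. by rewrite mem_rcons inE => ->; rewrite orbT. Qed.

Lemma okline_all (L : seq T) (c : seq (option T)) :
  okline L c = all (mem (None :: map Some L)) c.
Proof.
elim: c => //= o c ->; congr andb; case: o => [b|] //=.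
by rewrite inE /= mem_map //; apply: Some_inj.
Qed.

Lemma is_vword_vspan (t : vseqs T) I k' (w : vword T) : is_vseq A t ->
  vspan t I (fun n => A (k' + n)) w -> is_vword A w.
Proof.
move=> Ht [js [_ [_ [H3 [H4 ->]]]]]; split.
  case/hasP: H4 => q qin /eqP Hq; apply/flattenP; exists (substx (t q.1) q.2).
    by apply: map_f.
  by rewrite Hq substx_None; case: (Ht q.1).
move=> b /flattenP [w0 /mapP[q qin ->]] /mapP[o oin].
case: o oin => [b'|] oin; first by case=> ->; case: (Ht q.1) => _; apply.
have [_ H] := H3 q qin; case: q.2 H => // a Ha [->]; by exists (k' + q.1).
Qed.

Lemma isW_ccat (t : vseqs T) (js : seq (nat * T)) : is_vseq A t ->
  (forall q, q \in js -> inA A q.2) -> isW A (ccat t js).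
Proof.
move=> Ht H b /flattenP [w /mapP[q qin ->]] /mapP[o oin ->].
case: o oin => [b'|] oin /=; last exact: H.
by case: (Ht q.1) => _; apply.
Qed.

Lemma cspan_alpha (t : vseqs T) I (B1 B2 : nat -> seq T) z :
  (forall n, {subset B1 n <= B2 n}) -> cspan t I B1 z -> cspan t I B2 z.
Proof.
move=> HB [js [H1 [H2 [H3 H4]]]]; exists js; split=> //; split=> //; split=> //.
by move=> p /H3 [? ?]; split=> //; apply: HB.
Qed.
End Aux.

Section Main.
Variables (T : eqType) (A : nat -> seq T).
Hypotheses (hA_nonempty : forall n, A n != [::])
  (hA_incr : forall n, {subset A n <= A n.+1}).
Variables (k : nat) (E : seq T -> Prop).
Hypothesis hE : forall z, E z -> isW A z.
Variable s : vseqs T.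
Hypotheses (hs : is_vseq A s) (hlarge : large A k E s).
Variable x0 : T.

Definition FF (w : vword T) := fun u => exists a, a \in A k /\ u = subst w a.

Hypothesis Hneg : forall m, 1 <= m -> forall w,
  vspan s (fun n => n < m) (fun n => A (k + n)) w -> forall t, is_vseq A t ->
  extracted A (k + m) t (fun n => s (m + n)) ->
  ~ large A (k + m) (fun z => E z /\ E_F A E (FF w) z) t.

Definition Rep M (p : seq T) := exists js : seq (nat * T),
  [/\ sorted ltn (map fst js), forall q, q \in js -> q.1 < M /\ q.2 \in A (k + q.1)
    & p = ccat s js].

Lemma Rep_mono M M' p : M <= M' -> Rep M p -> Rep M' p.
Proof.
move=> HM [js [H1 H2 H3]]; exists js; split=> // q /H2 [Hq1 Hq2]; split=> //.
exact: leq_trans Hq1 HM.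
Qed.

Lemma Rep_app i M M' p v a : i <= M -> M <= M' -> Rep M p ->
  vspan s (fun n => M <= n < M') (fun n => A (k + n)) v -> a \in A (k + i) ->
  Rep M' (p ++ subst v a).
Proof.
move=> HiM HMM [jp [S1 H1 E1]] /vspanE [jv [_ S2 H2 _ E2]] Ha.
exists (jp ++ [seq (q.1, odflt a q.2) | q <- jv]); split.
- rewrite map_cat; apply/sorted_catP; split=> //.
    by rewrite -map_comp.
  move=> x y /mapP[q qin ->] /mapP[q' /mapP[q'' q''in ->] ->] /=.
  have [Hq _] := H1 q qin; have [/andP[Hq'' _] _] := H2 q''  q''in.
  exact: leq_trans Hq Hq''.
- move=> q; rewrite mem_cat => /orP[/H1 [Hq1 Hq2]|/mapP[q' q'in ->]].
    by split=> //; apply: leq_trans Hq1 HMM.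
  have [/andP[Hq1 Hq2] Hok] := H2 q' q'in; split=> //=.
  move: Hok; rewrite /okv; case: q'.2 => //= _.
  by apply: (Amono hA_incr _ Ha); rewrite leq_add2l (leq_trans HiM Hq1).
by rewrite ccat_cat E1 E2 subst_vcat.
Qed.

Lemma lineRep i M (t : vseqs T) L B (c : seq (option T)) : i <= M ->
  BR A (k + M) t (shift M s) L B -> size c = L -> okline (A (k + i)) c ->
  exists jl, [/\ vcat t (zip (iota 0 L) c) = vcat s jl, sorted ltn (map fst jl),
    forall q, q \in jl -> M <= q.1 < M + B /\ okv A k q,
    None \in c -> has (@isN T) jl & None \in c -> jl != [::]].
Proof.
move=> HiM HBR Hsc Hok.
set js0 := zip (iota 0 L) c.
have Hmf : map fst js0 = iota 0 L by apply: unzip1_zip; rewrite size_iota Hsc.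
have S0 : sorted ltn (map fst js0) by rewrite Hmf iota_ltn_sorted.
have H0 : forall p, p \in js0 -> p.1 < L /\ okv A (k + M) p.
  case=> n o /mem_zip2 [nI oc]; split; first by move: nI; rewrite mem_iota.
  rewrite /okv /=; case: o oc => // b bc.
  have := allP Hok _ bc => /= Hb; apply: (Amono hA_incr _ Hb).
  by rewrite -addnA leq_add2l (leq_trans HiM (leq_addr _ _)).
have [js' [E1 S1 M1 N1 [X1 _]]] := BR_vcompose hA_incr HBR S0 H0.
have HN : None \in c -> has (@isN T) js'.
  move=> Hc; apply: N1.
  have : has (pred1 None) (unzip2 js0) by rewrite unzip2_zip ?size_iota ?Hsc // has_pred1.
  by rewrite has_map.
exists [seq (M + q.1, q.2) | q <- js']; split.
- by rewrite E1 vcat_shift.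
- rewrite -map_comp (eq_map (g := addn M \o fst)) // map_comp.
  exact: sorted_shift.
- move=> q /mapP[q' q'in ->] /=; have [H1 H2] := M1 q' q'in.
  by rewrite leq_addr ltn_add2l H1; move: H2; rewrite /okv /= addnA.
- by move/HN; rewrite has_map.
by move/HN; case: (js').
Qed.

Lemma shrink M' (Ws : seq (vword T)) (t1 : vseqs T) : 1 <= M' ->
  (forall W, W \in Ws -> vspan s (fun n => n < M') (fun n => A (k + n)) W) ->
  is_vseq A t1 -> extracted A (k + M') t1 (shift M' s) ->
  exists t2, [/\ is_vseq A t2, extracted A (k + M') t2 (shift M' s) &
    forall W, W \in Ws -> forall z,
      cspan t2 (fun _ => True) (fun n => A (k + M' + n)) z ->
      ~ (E z /\ E_F A E (FF W) z)].
Proof.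
move=> HM HWs0 Ht1 Hext1; elim: Ws HWs0 => [|W Ws IH] HWs.
  by exists t1; split.
have [t2 [Ht2 Hext2 Hav]] := IH (fun W' H => HWs W' (in_tl W H)).
have := Hneg HM (HWs W (mem_head _ _)) Ht2 Hext2.
rewrite /large; move/not_all_ex_not; case=> w Hw0.
have [Hw Hw1] := imply_to_and _ _ Hw0.
have [Hextw Hno] := imply_to_and _ _ Hw1.
exists w; split=> //.
  exact: ext_trans Hextw Hext2.
move=> W'; rewrite inE => /orP[/eqP ->|W'in] z Hz HE.
  by apply: Hno; exists z.
apply: (Hav W' W'in z) => //.
exact: (@cspan_trans T A hA_incr x0 (k + M') w t2 z Hextw Hz).
Qed.

Lemma step i (P : seq (seq T)) M (t : vseqs T) : i <= M -> is_vseq A t ->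
  extracted A (k + M) t (shift M s) -> (forall p, p \in P -> Rep M p) ->
  exists v M' t', [/\ M < M', vspan s (fun n => M <= n < M') (fun n => A (k + n)) v,
    is_vseq A t', extracted A (k + M') t' (shift M' s) &
    forall p, p \in P -> forall a, a \in A (k + i) -> ~ E (p ++ subst v a)].
Proof.
move=> HiM Ht Hext HP.
set Lam := A (k + i).
have [L HL] := HJ Lam (allwords [:: true; false] (size P)).
have HL0 : 0 < L.
  have Hv0 : forall b, size b = L -> all (mem Lam) b ->
      nseq (size P) true \in allwords [:: true; false] (size P).
    by move=> *; rewrite mem_allwords size_nseq eqxx /= all_nseq orbT.
  have [c0 [Hc0 _ HN0 _]] := HL _ Hv0.
  by rewrite -Hc0; case: (c0) HN0.
have [B [HLB HBR Hext1]] := split_ext Hext HL0.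
set M' := M + B.
have HB0 : 0 < B := leq_trans HL0 HLB.
have HM' : 1 <= M' by rewrite /M' addn_gt0 HB0 orbT.
have Hext1' : extracted A (k + M') (shift L t) (shift M' s).
  by rewrite /M' addnA -shift_shift.
set LN := [seq c <- allwords (None :: map Some Lam) L | None \in c].
have HLN : forall c, c \in LN -> [/\ size c = L, okline Lam c & None \in c].
  by move=> c; rewrite mem_filter mem_allwords okline_all => /andP[HN /andP[/eqP Hs Ha]].
set line := fun c => vcat t (zip (iota 0 L) c).
set Ws := [seq map Some p ++ line c | p <- P, c <- LN].
have HWs : forall W, W \in Ws -> vspan s (fun n => n < M') (fun n => A (k + n)) W.
  move=> W /allpairsP [[p c] [pP cLN ->]] /=.
  have [Hsc Hokc HNc] := HLN c cLN.
  have [jl [El Sl Ml Nl Xl]] := lineRep HiM HBR Hsc Hokc.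
  have [jp [Sp Mp Ep]] := HP p pP.
  apply: (vspan_sub (I := fun n => 0 <= n < M')); first by move=> n /andP[].
  apply/vspanE; exists (liftc jp ++ jl); split.
  - by case: (liftc jp) => //; apply: Xl.
  - rewrite map_cat /liftc -map_comp; apply/sorted_catP; split => //.
    move=> x y /mapP[q qin ->] /mapP[q' q'in ->] /=.
    have [Hq _] := Mp q qin; have [/andP[Hq' _] _] := Ml q' q'in.
    exact: leq_trans Hq Hq'.
  - move=> q; rewrite mem_cat => /orP[/mapP[q' q'in ->]|qin] /=.
      have [Hq1 Hq2] := Mp q' q'in; split=> //.
      exact: (leq_trans Hq1 (leq_addr _ _)).
    by have [/andP[_ H1] H2] := Ml q qin; split.
  - by rewrite has_cat Nl ?orbT.
  by rewrite vcat_cat -ccat_lift -Ep -El.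
have Ht1 : is_vseq A (shift L t) by move=> n; apply: Ht.
have [t2 [Ht2 Hext2 Hav]] := shrink HM' HWs Ht1 Hext1'.
have Hext2k : extracted A k t2 s := ext_down Hext2.
have [g [Eg Hg]] := hlarge Ht2 Hext2k.
have /cspanE [jg [Ng Sg Mg Eqg]] := Hg.
set J := (foldr maxn 0 (map fst jg)).+1.
have [B2 [HJB2 HBR2 Hext3]] := split_ext Hext2 (ltn0Sn (foldr maxn 0 (map fst jg))).
have Hjg : forall p, p \in jg -> p.1 < J /\ p.2 \in A (k + M' + p.1).
  move=> p pin; split; first by rewrite ltnS; apply: leq_foldmax; apply: map_f.
  by apply: (Amono hA_incr _ (Mg p pin)); rewrite -addnA leq_add2l leq_addl.
have [jg2 [Eg2 Sg2 Mg2 Ng2]] := BR_ccompose hA_incr x0 HBR2 Sg Hjg.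
set jg3 := [seq (M' + q.1, q.2) | q <- jg2].
have Eg3 : g = ccat s jg3 by rewrite Eqg Eg2 ccat_shift.
have Hbad : forall W, W \in Ws -> exists a, a \in A k /\ ~ E (subst W a ++ g).
  move=> W HW.
  have Hg' : cspan t2 (fun _ => True) (fun n => A (k + M' + n)) g.
    apply: cspan_alpha Hg => n; apply: (Amono hA_incr).
    by rewrite -addnA leq_add2l leq_addl.
  have Hno := Hav W HW g Hg'.
  apply: NNPP => Hnot; apply: Hno; split=> //; split; first exact: hE.
  move=> u [a [ak ->]]; apply: NNPP => HnE; apply: Hnot; exists a; split=> //.
pose chi := fun b : seq T => [seq pb (E (p ++ ccat t (zip (iota 0 L) b) ++ g)) | p <- P].
have Hv : forall b, size b = L -> all (mem Lam) b ->
    chi b \in allwords [:: true; false] (size P).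
  move=> b _ _; rewrite mem_allwords size_map eqxx /=.
  by apply/allP => x /mapP[p _ ->]; case: pb.
have [c [Hsc Hokc HNc Hmono]] := HL chi Hv.
have cLN : c \in LN by rewrite mem_filter HNc mem_allwords Hsc eqxx -okline_all.
have [jl [El Sl Ml Nl Xl]] := lineRep HiM HBR Hsc Hokc.
have Hsubl : forall a, subst (line c) a = ccat t (zip (iota 0 L) (subst c a)).
  by move=> a; rewrite /line subst_vcat map_pair_zip.
exists (line c ++ map Some g), (M' + B2), (shift J t2); split.
- by apply: ltn_addr; rewrite /M' -{1}[M]addn0 ltn_add2l.
- apply/vspanE; exists (jl ++ liftc jg3); split.
  + by case: (jl) (Xl HNc).
  + rewrite map_cat /liftc -map_comp; apply/sorted_catP; split => //.
      rewrite (eq_map (g := fst)) // /jg3 -map_comp (eq_map (g := addn M' \o fst)) // map_comp.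
      exact: sorted_shift.
    move=> x y /mapP[q qin ->] /mapP[q' q'in ->] /=.
    have [/andP[_ Hq] _] := Ml q qin.
    move: q'in => /mapP[q'' _ ->] /=; exact: leq_trans Hq (leq_addr _ _).
  + move=> q; rewrite mem_cat => /orP[qin|/mapP[q' /mapP[q'' q''in ->] ->]] /=.
      have [/andP[H1 H2] H3] := Ml q qin; split=> //.
      by rewrite H1 (leq_trans H2 (leq_addr _ _)).
    have [H1 H2] := Mg2 q'' q''in; split.
      by rewrite ltn_add2l H1 andbT (leq_trans (leq_addr _ _) (leq_addr _ _)).
    by rewrite /okv /= addnA.
  + by rewrite has_cat Nl.
  by rewrite vcat_cat -ccat_lift -Eg3 -El.
- by move=> n; apply: Ht2.
- by rewrite addnA -shift_shift.
move=> p pP a aL HE.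
have HW : map Some p ++ line c \in Ws by apply: allpairs_f.
have [a0 [a0k Ha0]] := Hbad _ HW.
have a0L : a0 \in Lam by apply: (Amono hA_incr _ a0k); rewrite leq_addr.
have := Hmono a a0 aL a0L; rewrite /chi => /(congr1 (nth false ^~ (index p P))).
rewrite !(nth_map [::]) ?index_mem // nth_index // => Heq.
apply: Ha0; rewrite subst_cat subst_map_Some -catA Hsubl.
apply/pbP; rewrite -Heq; apply/pbP.
by move: HE; rewrite subst_cat subst_map_Some Hsubl.
Qed.

Definition St := (seq (seq T) * nat * vseqs T)%type.
Definition Inv i (st : St) := [/\ i <= st.1.2, is_vseq A st.2,
  extracted A (k + st.1.2) st.2 (shift st.1.2 s) & forall p, p \in st.1.1 -> Rep st.1.2 p].
Definition Spec i (st : St) (res : vword T * St) :=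
  [/\ st.1.2 < res.2.1.2,
      vspan s (fun n => st.1.2 <= n < res.2.1.2) (fun n => A (k + n)) res.1,
      is_vseq A res.2.2, extracted A (k + res.2.1.2) res.2.2 (shift res.2.1.2 s) &
      (forall p, p \in st.1.1 -> forall a, a \in A (k + i) -> ~ E (p ++ subst res.1 a)) /\
      res.2.1.1 = st.1.1 ++ [seq p ++ subst res.1 a | p <- st.1.1, a <- A (k + i)]].

Lemma step_spec i st : Inv i st -> exists res, Spec i st res.
Proof.
case: st => [[P M] t] [H1 H2 H3 H4] /=.
have [v [M' [t' [G1 G2 G3 G4 G5]]]] := step H1 H2 H3 H4.
by exists (v, (P ++ [seq p ++ subst v a | p <- P, a <- A (k + i)], M', t')); split.
Qed.

Definition stepf i (st : St) : vword T * St :=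
  match excluded_middle_informative (exists res, Spec i st res) with
  | left H => proj1_sig (constructive_indefinite_description _ H)
  | right _ => ([::], st)
  end.

Lemma stepf_spec i st : Inv i st -> Spec i st (stepf i st).
Proof.
move=> H; rewrite /stepf; case: excluded_middle_informative => [H'|H']; last first.
  by case: H'; apply: step_spec.
exact: proj2_sig (constructive_indefinite_description _ H').
Qed.

Fixpoint stt n : St := if n is n'.+1 then (stepf n' (stt n')).2 else ([:: [::]], 0, s).
Definition vv n := (stepf n (stt n)).1.

Lemma Inv_stt n : Inv n (stt n).
Proof.
elim: n => [|n IH].
  split=> //=; first by rewrite shift0 addn0; apply: ext_refl.
  by move=> p; rewrite inE => /eqP ->; exists [::].
have [H1 H2 H3 H4 [H5 H6]] := stepf_spec IH.
case: IH => I1 I2 I3 I4; split=> //=.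
- exact: leq_ltn_trans I1 H1.
move=> p; rewrite H6 mem_cat => /orP[pP|/allpairsP [[p' a] [p'P aA ->]] /=].
  by apply: (Rep_mono (ltnW H1)); apply: I4.
exact: Rep_app I1 (ltnW H1) (I4 p' p'P) H2 aA.
Qed.

Lemma prefix j : forall js : seq (nat * T), sorted ltn (map fst js) ->
  (forall q, q \in js -> q.1 < j /\ q.2 \in A (k + q.1)) -> ccat vv js \in (stt j).1.1.
Proof.
elim: j => [|j IH] js Hs Hjs.
  case: js Hs Hjs => [|q js] _ Hjs; first by rewrite inE.
  by have [] := Hjs q (mem_head _ _).
have [_ _ _ _ [_ HP]] := stepf_spec (Inv_stt j).
change ((stt j.+1).1.1) with ((stepf j (stt j)).2.1.1); rewrite HP mem_cat.
case/lastP: js Hs Hjs => [|js' [q1 a]] Hs Hjs.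
  by rewrite (IH [::]).
move: Hs; rewrite map_rcons -cats1 => /sorted_catP [Hs' _ Hlt].
have Hlt' : forall q, q \in js' -> q.1 < q1.
  by move=> q qin; apply: Hlt; rewrite ?mem_head //; apply: map_f.
have [Hq1 Ha] := Hjs (q1, a) (rcons_last _ _).
case: (ltnP q1 j) => Hq.
  rewrite IH //; first by rewrite map_rcons -cats1; apply/sorted_catP; split.
  move=> q; rewrite mem_rcons inE => /orP[/eqP ->|qin]; first by split.
  by have [_ H] := Hjs q (rcons_in _ qin); split=> //; apply: ltn_trans (Hlt' q qin) Hq.
have Ej : q1 = j by apply/eqP; rewrite eqn_leq Hq andbT -ltnS.
apply/orP; right; apply/allpairsP; exists (ccat vv js', a); split=> //=.
- apply: IH => // q qin; rewrite -Ej; split; first exact: Hlt'.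
  by have [] := Hjs q (rcons_in _ qin).
- by rewrite -Ej.
by rewrite -cats1 ccat_cat ccat1 Ej.
Qed.

Lemma main_contra : False.
Proof.
pose Mf n := (stt n).1.2.
have Sp n := stepf_spec (Inv_stt n).
have Hv : is_vseq A vv.
  by move=> n; case: (Sp n) => _ Hvs _ _ _; exact: is_vword_vspan hs Hvs.
have Hext : extracted A k vv s.
  move=> l; exists Mf; split=> //; split=> i _; by case: (Sp i).
have [z [Ez /cspanE [js [Ne S Mz Ezs]]]] := hlarge Hv Hext.
case/lastP: js Ne S Mz Ezs => [//|js' [j a]] _ S Mz Ezs.
move: S; rewrite map_rcons -cats1 => /sorted_catP [S' _ Hlt].
have Ha : a \in A (k + j) by have := Mz (j, a) (rcons_last _ _).
have Hpre : ccat vv js' \in (stt j).1.1.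
  apply: prefix => // q qin; split.
    by apply: Hlt; rewrite ?mem_head //; apply: map_f.
  by apply: Mz; rewrite mem_rcons inE qin orbT.
have [_ _ _ _ [Good _]] := Sp j.
apply: (Good _ Hpre a Ha).
by rewrite Ezs -cats1 ccat_cat ccat1 in Ez.
Qed.
End Main.

Theorem lemma3p8 (T : eqType) (A : nat -> seq T)
  (hA_nonempty : forall n, A n != [::])
  (hA_incr : forall n, {subset A n <= A n.+1})
  (k : nat) (E : seq T -> Prop) (hE : forall z, E z -> isW A z)
  (s : vseqs T) (hs : is_vseq A s)
  (hlarge : large A k E s) :
  exists m : nat, 1 <= m /\
    exists w : vword T,
      vspan s (fun n => n < m) (fun n => A (k + n)) w /\
      exists t : vseqs T, is_vseq A t /\
        extracted A (k + m) t (fun n => s (m + n)) /\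
        large A (k + m)
          (fun z => E z /\ E_F A E (fun u => exists a, a \in A k /\ u = subst w a) z)
          t.
Proof.
apply: NNPP => Hno.
have [x0 _] : exists x0, x0 \in A 0.
  by case: (A 0) (hA_nonempty 0) => // a l _; exists a; rewrite mem_head.
apply: (@main_contra T A hA_incr k E hE s hs hlarge x0).
move=> m Hm w Hw t Ht Hext Hl; apply: Hno; exists m; split=> //; exists w; split=> //.
by exists t; split.
Qed.
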